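(* Let $(G_1,v_1)$ and $(G_2,v_2)$ be Brill–Noether general once-marked graphs of genera $g_1,g_2$, and let $G$ be the graph of genus $g=g_1+g_2$ obtained from the disjoint union of $G_1$ and $G_2$ by identifying $v_1$ with $v_2$. Then $G$ is Brill–Noether general.
   Context: A graph is a finite, connected, loopless multigraph (parallel edges allowed); its genus is $g=|E(G)|-|V(G)|+1$. A divisor is an element of the free abelian group on $V(G)$. Linear equivalence is generated by chip-firing (firing $w$ subtracts $\mathrm{val}(w)$ chips from $w$ and adds to each other vertex the number of edges joining it to $w$). The rank $r(D)$ is $-1$ if $D$ is not equivalent to an effective divisor, else the largest $r\ge0$ such that $D-E$ is equivalent to an effective divisor for every effective $E$ of degree $r$. A graph $G$ of genus $g$ is Brill–Noether general if for every divisor $D$ and every integer $r$ with $0\le r\le r(D)$, $g-(r+1)(g-\deg D+r)\ge0$. For a vertex $v$ and divisor $D$ on a genus-$g$ graph, $s_i(D,v)=\min\{\ell\in\mathbb Z: r(D+\ell v)\ge i\}$ and $\lambda_i(D,v)=i-s_i(D,v)+g-\deg D$ for $i\ge0$; the Weierstrass partition $\lambda(D,v)=(\lambda_0,\lambda_1,\dots)$ is a nonincreasing sequence of nonnegative integers, finitely many nonzero, and $|\lambda(D,v)|=\sum_i\lambda_i(D,v)$. A once-marked graph $(G,v)$ of genus $g$ is Brill–Noether general if $|\lambda(D,v)|\le g$ for every divisor $D$ on $G$. *)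

(* Defs.v *)
From mathcomp Require Import all_boot all_order all_algebra.
Set Implicit Arguments. Unset Strict Implicit. Unset Printing Implicit Defensive.
Import Order.TTheory GRing.Theory Num.Theory.
Local Open Scope ring_scope.

Section Graphs.
Variable V : finType.
Implicit Types (m : V -> V -> nat) (D : V -> int).

Definition is_graph m : Prop :=
  (forall u w, m u w = m w u) /\ (forall u, m u u = 0%N) /\
  (forall u w, connect (fun x y => 0 < m x y)%N u w).

Definition valence m (u : V) : nat := (\sum_(w : V) m u w)%N.

(* number of edges: each edge counted twice in the double sum *)
Definition num_edges m : nat := (\sum_(u : V) \sum_(w : V) m u w)%N./2.

Definition genus m : int := (num_edges m)%:Z - (#|V|)%:Z + 1.

Definition deg D : int := \sum_(u : V) D u.

Definition effective D : Prop := forall u, 0 <= D u.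

(* D' is obtained from D by firing each vertex w exactly f w times *)
Definition lin_equiv m D D' : Prop :=
  exists f : V -> int, forall u,
    D' u = D u - f u * (valence m u)%:Z + \sum_(w : V) f w * (m w u)%:Z.

Definition equiv_effective m D : Prop :=
  exists D', lin_equiv m D D' /\ effective D'.

Definition rank_prop m D (r : nat) : Prop :=
  forall E : V -> nat, (\sum_(u : V) E u)%N = r ->
    equiv_effective m (fun u => D u - (E u)%:Z).

Definition rank_atleast m D (i : nat) : Prop :=
  exists r : nat, (i <= r)%N /\ rank_prop m D r.

Definition BN_general m : Prop :=
  forall (D : V -> int) (r : nat), rank_atleast m D r ->
    0 <= genus m - (r%:Z + 1) * (genus m - deg D + r%:Z).

Definition add_at D (v : V) (l : int) : V -> int :=
  fun u => D u + (if u == v then l else 0).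

Definition is_s m D (v : V) (i : nat) (s : int) : Prop :=
  rank_atleast m (add_at D v s) i /\
  forall l : int, rank_atleast m (add_at D v l) i -> s <= l.

Definition weierstrass m D (v : V) (lam : nat -> int) : Prop :=
  forall i : nat, is_s m D v i (i%:Z + genus m - deg D - lam i).

Definition marked_BN_general m (v : V) : Prop :=
  forall D : V -> int, exists lam : nat -> int, weierstrass m D v lam /\
    exists N : nat, (forall j : nat, (N <= j)%N -> lam j = 0) /\
      \sum_(i < N) lam i <= genus m.

End Graphs.

(* Wedge sum: vertices of G1 together with the vertices of G2 other than v2;
   v2 is identified with v1. *)
Section Wedge.
Variables (V1 V2 : finType) (m1 : V1 -> V1 -> nat) (v1 : V1)
          (m2 : V2 -> V2 -> nat) (v2 : V2).

Definition wedge_vtx : finType := (V1 + {x : V2 | x != v2})%type.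

Definition wedge_mult (a b : wedge_vtx) : nat :=
  match a, b with
  | inl x, inl y => m1 x y
  | inl x, inr y => if x == v1 then m2 v2 (val y) else 0%N
  | inr x, inl y => if y == v1 then m2 (val x) v2 else 0%N
  | inr x, inr y => m2 (val x) (val y)
  end.
End Wedge.
Arguments wedge_vtx : clear implicits.
Arguments wedge_mult : clear implicits.

(* Main.v *)
Require Import Defs.
From mathcomp Require Import all_boot all_order all_algebra.
From mathcomp Require Import ring lra zify.
Set Implicit Arguments. Unset Strict Implicit. Unset Printing Implicit Defensive.
Import Order.TTheory GRing.Theory Num.Theory.
Local Open Scope ring_scope.

From Stdlib Require Import Classical.

Lemma sum_subtype (V : finType) (v : V) (R : nmodType) (F : V -> R) :
  \sum_(y : V) F y = F v + \sum_(z : {x : V | x != v}) F (val z).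
Proof.
rewrite (bigD1 v) //=; congr (_ + _).
rewrite (reindex_omap (val : {x : V | x != v} -> V) insub); last first.
  by move=> i Pi; rewrite insubT.
by apply: eq_bigl=> -[i iA]/=; rewrite insubT ?iA /= eqxx.
Qed.

Section G.
Variable V : finType.
Implicit Types (m : V -> V -> nat) (D : V -> int).

Lemma equiv_eff_ext m D D' : (forall u, D u = D' u) ->
  equiv_effective m D -> equiv_effective m D'.
Proof.
move=> H [X [[f Hf] eX]]; exists X; split=> //; exists f => u.
by rewrite Hf H.
Qed.

Lemma equiv_eff_add m D X : effective X -> equiv_effective m D ->
  equiv_effective m (fun u => D u + X u).
Proof.
move=> eX [D' [[f Hf] eD]]; exists (fun u => D' u + X u); split.
  exists f => u; rewrite Hf; ring.
by move=> u; apply: addr_ge0.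
Qed.

Lemma rank_prop_mono m D r r' : (r <= r')%N -> V -> rank_prop m D r' -> rank_prop m D r.
Proof.
move=> le w H E hE.
pose E' u := (E u + (if u == w then r' - r else 0))%N.
have hE' : (\sum_u E' u)%N = r'.
  rewrite big_split /= hE -big_mkcond /= big_pred1_eq; lia.
apply: (equiv_eff_ext _ (equiv_eff_add (X := fun u => ((if u == w then r' - r else 0)%N)%:Z) _ (H E' hE'))).
  by move=> u /=; rewrite /E' PoszD; ring.
by move=> u.
Qed.
End G.

Section G.
Variable V : finType.
Implicit Types (m : V -> V -> nat) (D : V -> int).

Lemma rank_atleast_prop m D i : V -> rank_atleast m D i -> rank_prop m D i.
Proof. by move=> w [r [le H]]; apply: rank_prop_mono le w H. Qed.

Lemma rank_prop_sub m D v r : rank_prop m D r.+1 ->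
  rank_prop m (add_at D v (-1)) r.
Proof.
move=> H E hE.
pose E' u := (E u + (u == v))%N.
have hE' : (\sum_u E' u)%N = r.+1.
  rewrite big_split /= hE. rewrite (bigD1 v) //= eqxx big1 ?addn0 ?addn1 //.
  by move=> u /negbTE ->.
apply: (equiv_eff_ext _ (H E' hE')) => u; rewrite /add_at /E'.
by case: (u == v); rewrite /= ?PoszD; ring.
Qed.

Lemma lam_noninc m D v lam : V -> weierstrass m D v lam ->
  forall i, lam i.+1 <= lam i.
Proof.
move=> w H i.
have [A _] := H i.+1.
have [_ B] := H i.
have C : rank_atleast m (add_at D v ((i.+1)%:Z + genus m - deg D - lam i.+1 - 1)) i.
  exists i; split => //.
  have := rank_prop_sub v (rank_atleast_prop w A).
  move=> P E hE; apply: (equiv_eff_ext _ (P E hE)) => u.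
  by rewrite /add_at; case: (u == v); ring.
  have := B _ C; lia.
Qed.

Lemma lam_sum (lam : nat -> int) N g r :
  (forall i, lam i.+1 <= lam i) -> (forall j, (N <= j)%N -> lam j = 0) ->
  \sum_(i < N) lam i <= g -> \sum_(i < r) lam i <= g.
Proof.
move=> dec z S.
have mono : forall i j, (i <= j)%N -> lam j <= lam i.
  move=> i j /subnK <-; elim: (j - i)%N => // k IH.
  by rewrite addSn; apply: le_trans IH; apply: dec.
have pos : forall i, 0 <= lam i.
  move=> i; rewrite -(z (maxn i N)) ?leq_maxr //; apply: mono; exact: leq_maxl.
case: (leqP r N) => h.
  apply: le_trans S; rewrite -(big_mkord xpredT) -(big_mkord xpredT lam).
  rewrite (big_cat_nat _ h) //= lerDl; apply: sumr_ge0 => i _; exact: pos.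
rewrite -(big_mkord xpredT) (big_cat_nat _ (ltnW h)) //= big_mkord.
rewrite [X in _ + X]big1_seq ?addr0 //; move=> i /andP[_]; rewrite mem_index_iota => /andP[h1 _]; exact: z.
Qed.

Lemma sum_even m : (forall u w, m u w = m w u) -> (forall u, m u u = 0%N) ->
  ~~ odd (\sum_(u : V) \sum_(w : V) m u w)%N.
Proof.
move=> sym dg.
pose lt (u w : V) := (nat_of_ord (enum_rank u) < nat_of_ord (enum_rank w))%N.
have E : (\sum_(u : V) \sum_(w : V) m u w = 
   \sum_(u : V) \sum_(w | lt u w) m u w + \sum_(u : V) \sum_(w | lt w u) m u w)%N.
  rewrite -big_split; apply: eq_bigr => u _.
  rewrite (bigID (lt u)); congr (_ + _).
rewrite big_mkcond [RHS]big_mkcond; apply: eq_bigr => w _ /=.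
  case: (eqVneq w u) => [->|ne]; first by rewrite dg /lt ltnn.
  rewrite /lt; case: ltngtP => // h.
  by have := enum_rank_inj (val_inj h); move=> h2; rewrite h2 eqxx in ne.
have E2 : (\sum_(u : V) \sum_(w | lt w u) m u w = \sum_(u : V) \sum_(w | lt u w) m u w)%N.
  under eq_bigr => u _ do rewrite big_mkcond.
  under [RHS]eq_bigr => u _ do rewrite big_mkcond.
  rewrite exchange_big; apply: eq_bigr => u _; apply: eq_bigr => w _; by rewrite sym.
by rewrite E E2 addnn odd_double.
Qed.
End G.

Lemma PoszS (I : Type) (r : seq I) (P : pred I) (F : I -> nat) :
  Posz (\sum_(i <- r | P i) F i)%N = \sum_(i <- r | P i) Posz (F i).
Proof. exact: (big_morph Posz PoszD). Qed.

Section W.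
Variables (V1 V2 : finType) (m1 : V1 -> V1 -> nat) (v1 : V1)
          (m2 : V2 -> V2 -> nat) (v2 : V2).
Local Notation W := (wedge_vtx V1 V2 v2).
Local Notation M := (wedge_mult V1 V2 m1 v1 m2 v2).
Local Notation S2 := {x : V2 | x != v2}.

Lemma sumW (R : nmodType) (F : W -> R) :
  \sum_(a : W) F a = \sum_(x : V1) F (inl x) + \sum_(z : S2) F (inr z).
Proof. exact: big_sumType. Qed.

Lemma valW1 x : valence M (inl x) =
  (valence m1 x + (if x == v1 then \sum_(z : S2) m2 v2 (val z) else 0))%N.
Proof.
rewrite /valence sumW /=; congr (_ + _)%N.
by case: (x == v1) => //; rewrite big1.
Qed.

Lemma valW2 z : valence M (inr z) = valence m2 (val z).
Proof.
rewrite /valence sumW /= (sum_subtype v2 (fun y => m2 (val z) y)); congr (_ + _)%N.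
rewrite (bigD1 v1) //= eqxx big1; first by rewrite Monoid.mulm1.
by move=> x /negbTE ->.
Qed.

Lemma dsumW : (\sum_(a : W) \sum_(b : W) M a b =
   \sum_(x : V1) \sum_(y : V1) m1 x y + (\sum_(y : V2) \sum_(w : V2) m2 y w - m2 v2 v2))%N.
Proof.
rewrite sumW.
transitivity (\sum_x valence M (inl x) + \sum_z valence M (inr z))%N; first by [].
under eq_bigr => x _ do rewrite valW1.
under [X in (_ + X)%N]eq_bigr => z _ do rewrite valW2.
rewrite big_split /= -big_mkcond /= big_pred1_eq.
rewrite (sum_subtype v2 (fun y => \sum_w m2 y w)) /= (sum_subtype v2 (m2 v2)).
rewrite /valence.
set A := (\sum_(x : V1) _)%N; set B := (\sum_(z : S2) m2 v2 (val z))%N.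
set C := (\sum_(z : S2) _)%N.
lia.
Qed.

Lemma genusW : is_graph m1 -> is_graph m2 -> genus M = genus m1 + genus m2.
Proof.
move=> [s1 [d1 _]] [s2 [d2 _]].
rewrite /genus /num_edges dsumW d2 subn0 halfD.
have e1 := sum_even s1 d1.
rewrite (negbTE e1) /= add0n.
have cW : #|W| = (#|V1| + #|V2|.-1)%N.
  rewrite /wedge_vtx card_sum card_sig -(cardC1 v2); congr (_ + _)%N.
have cV2 : (0 < #|V2|)%N by apply/card_gt0P; exists v2.
rewrite cW PoszD -!addrA; congr (_ + _)%R. rewrite PoszD. set X := ((\sum_(y:V2) _)./2)%N. rewrite (_ : Posz (#|V2|.-1) = Posz #|V2| - 1); first ring. by move: cV2; case: #|V2| => // n _; rewrite /= -addn1 PoszD addrK.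
Qed.
End W.

Section W.
Variables (V1 V2 : finType) (m1 : V1 -> V1 -> nat) (v1 : V1)
          (m2 : V2 -> V2 -> nat) (v2 : V2).
Local Notation W := (wedge_vtx V1 V2 v2).
Local Notation M := (wedge_mult V1 V2 m1 v1 m2 v2).
Local Notation S2 := {x : V2 | x != v2}.

Definition lift2 (T : Type) (F : S2 -> T) (d : T) (y : V2) : T :=
  if @insub _ (fun x => x != v2) S2 y is Some z then F z else d.

Lemma lift2_v2 T F d : @lift2 T F d v2 = d.
Proof. by rewrite /lift2 insubF ?eqxx. Qed.

Lemma lift2_val T F d z : @lift2 T F d (val z) = F z.
Proof. by rewrite /lift2 valK. Qed.

Lemma V2_cases (P : V2 -> Prop) : P v2 -> (forall z : S2, P (val z)) -> forall y, P y.
Proof.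
move=> H1 H2 y; case: (eqVneq y v2) => [->|ne] //.
exact: (H2 (exist _ y ne)).
Qed.

Lemma key (D : W -> int) (E1 : V1 -> nat) (E2 : V2 -> nat) :
  rank_prop M D ((\sum_x E1 x) + (\sum_y E2 y))%N ->
  exists l : int,
    equiv_effective m1 (fun x => D (inl x) - (E1 x)%:Z + (if x == v1 then l else 0)) /\
    equiv_effective m2 (fun y => lift2 (fun z => D (inr z)) 0 y - (E2 y)%:Z
                                  - (if y == v2 then l else 0)).
Proof.
move=> H.
pose E (a : W) : nat := match a with
  | inl x => (E1 x + (if x == v1 then E2 v2 else 0))%N
  | inr z => E2 (val z) end.
have hE : (\sum_a E a)%N = ((\sum_x E1 x) + (\sum_y E2 y))%N.
  rewrite sumW big_split /= -big_mkcond /= big_pred1_eq (sum_subtype v2 E2).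
  by rewrite addnA.
have [D' [[f Hf] eD']] := H E hE.
pose f2 := lift2 (fun z => f (inr z)) (f (inl v1)).
pose Delta := \sum_(w : V2) f2 w * (m2 w v2)%:Z - f2 v2 * (valence m2 v2)%:Z.
exists (Delta - (E2 v2)%:Z); split.
  exists (fun x => D' (inl x)); split; last by move=> x; apply: eD'.
  exists (fun x => f (inl x)) => x.
  rewrite Hf /= valW1 sumW /=.
  case: (eqVneq x v1) => [->|ne]; last first.
    rewrite !addn0 [X in _ + (_ + X)]big1 ?addr0 // => z _; exact: mulr0.
  rewrite /Delta (sum_subtype v2) /valence (sum_subtype v2 (m2 v2)) /f2.
  rewrite !lift2_v2.
  rewrite !PoszD !PoszS mulrDr mulr_sumr.
  set A := \sum_(z : S2) f (inr z) * _.
  set B := \sum_(z : S2) _ * _.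
  have -> : B = A by apply: eq_bigr => z _; rewrite lift2_val.
  clearbody A; ring.
exists (lift2 (fun z => D' (inr z)) 0); split; last first.
  by apply: V2_cases => [|z]; rewrite ?lift2_v2 ?lift2_val //; apply: eD'.
exists f2; apply: V2_cases => [|z].
  rewrite !lift2_v2 eqxx /Delta; ring.
rewrite !lift2_val Hf /= valW2 sumW /=.
rewrite (negbTE (valP z)) subr0 /f2 lift2_val (sum_subtype v2) lift2_v2.
under [X in _ = _ + (_ + X)]eq_bigr => z0 _ do rewrite lift2_val.
have -> : \sum_x f (inl x) * (if x == v1 then m2 v2 (sval z) else 0%N)%:Z
   = f (inl v1) * (m2 v2 (sval z))%:Z.
  rewrite (bigD1 v1) //= eqxx big1 ?addr0 // => x /negbTE ->; by rewrite mulr0.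
ring.
Qed.
End W.

Lemma side (V : finType) (m : V -> V -> nat) (D : V -> int) (v : V) lam a :
  weierstrass m D v lam ->
  exists E : V -> nat, (\sum_u E u)%N = a /\
   forall l : int, equiv_effective m (fun u => D u - (E u)%:Z + (if u == v then l else 0)) ->
     a%:Z + genus m - deg D - lam a <= l.
Proof.
move=> Wk; set s := (a%:Z + genus m - deg D - lam a).
have [_ B] := Wk a.
have noR : ~ rank_atleast m (add_at D v (s - 1)) a.
  by move=> R; have := B _ R; lia.
have [E [hE nE]] : exists E : V -> nat, (\sum_u E u)%N = a /\
   ~ equiv_effective m (fun u => add_at D v (s - 1) u - (E u)%:Z).
  apply: NNPP => C; apply: noR; exists a; split => // E hE.
  apply: NNPP => C2; apply: C; by exists E.
exists E; split => // l Hl.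
case: (lerP s l) => // lt; exfalso; apply: nE.
have := equiv_eff_add (X := fun u => if u == v then s - 1 - l else 0) _ Hl.
move=> /(_ _) H; apply: (equiv_eff_ext _ (H _)).
  move=> u; rewrite /add_at; case: (u == v); ring.
move=> u; case: (u == v) => //; lia.
Qed.

Theorem mainTheorem10 (V1 V2 : finType) (m1 : V1 -> V1 -> nat) (v1 : V1)
  (m2 : V2 -> V2 -> nat) (v2 : V2) :
  is_graph m1 -> is_graph m2 ->
  marked_BN_general m1 v1 -> marked_BN_general m2 v2 ->
  BN_general (wedge_mult V1 V2 m1 v1 m2 v2).
Proof.
move=> G1 G2 B1 B2 D r Rk.
have Rp := rank_atleast_prop (inl v1) Rk.
pose D1 := fun x => D (inl x).
pose D2 := lift2 (fun z => D (inr z)) 0.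
have [lam [W1 [N1 [z1 s1]]]] := B1 D1.
have [mu [W2 [N2 [z2 s2]]]] := B2 D2.
have hdeg : deg D = deg D1 + deg D2.
  by rewrite /deg sumW (sum_subtype v2) /D2 lift2_v2 add0r; congr (_ + _);
     apply: eq_bigr => z _; rewrite lift2_val.
have hg := @genusW _ _ m1 v1 m2 v2 G1 G2.
set K := r%:Z + genus m1 + genus m2 - deg D1 - deg D2.
have claim : forall a : 'I_r.+1, K <= lam a + mu (r - a)%N.
  move=> a.
  have [E1 [hE1 P1]] := @side _ _ _ _ lam a W1.
  have [E2 [hE2 P2]] := @side _ _ _ _ mu (r - a)%N W2.
  have ha : (\sum_x E1 x + \sum_y E2 y)%N = r.
    by rewrite hE1 hE2 subnKC // -ltnS.
  rewrite -ha in Rp.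
  have [l [Q1 Q2]] := key Rp.
  have L1 := P1 l Q1.
  have L2 : (r - a)%N%:Z + genus m2 - deg D2 - mu (r - a)%N <= - l.
    apply: P2; apply: (equiv_eff_ext _ Q2) => y.
    by case: (y == v2); rewrite ?oppr0 ?subr0 ?addr0 // opprK.
  have ar : (a <= r)%N by rewrite -ltnS.
  move: L1 L2; rewrite /K; lia.
have S : \sum_(a < r.+1) K <= \sum_(a < r.+1) (lam a + mu (r - a)%N).
  by apply: ler_sum => a _; apply: claim.
rewrite [X in _ <= X]big_split /= sumr_const card_ord in S.
have Sl : \sum_(a < r.+1) lam a <= genus m1.
  exact: (@lam_sum lam N1 (genus m1) r.+1 (lam_noninc v1 W1) z1 s1).
have Sm : \sum_(a < r.+1) mu (r - a)%N <= genus m2.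
  rewrite (reindex_inj rev_ord_inj).
  rewrite (eq_bigr (fun a : 'I_r.+1 => mu a)); last first.
    by move=> a _; rewrite /= subSS subKn // -ltnS.
  exact: (@lam_sum mu N2 (genus m2) r.+1 (lam_noninc v2 W2) z2 s2).
rewrite hg hdeg subr_ge0.
apply: le_trans (lerD Sl Sm); apply: le_trans S.
rewrite le_eqVlt; apply/orP; left; apply/eqP.
rewrite /K -mulr_natr natz -addn1 PoszD; ring.
Qed.
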